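(* Let $\alpha>0$ and $p\in\big(0,\max\{\alpha/2,\alpha-1\}\big]$. Then $$\widehat M_{p,\alpha}:=\sup\Big\{\frac{\alpha^2}{4p^2}\,\frac{z^2}{\Phi_{p,\alpha}(z)}:\ z\in\mathbb R\setminus\{0\}\Big\}<\infty,$$ and the Legendre transform satisfies $\Phi^*_{p,\alpha}(\xi)\le\widehat M_{p,\alpha}\big(\tfrac p\alpha\xi\big)^2$ for all $\xi\in\mathbb R$. Moreover, $\widehat M_{p,\alpha}\ge1/4$; for $p=1/2$ and $\alpha\ge1$ one has $\widehat M_{1/2,\alpha}\le\alpha/2$ and $\widehat M_{1/2,1}=1/2$; and for $p>0$ and $\alpha=p+1$ one has $\widehat M_{p,p+1}=1/4$.
   Context: For $\alpha>0$, $p>0$: $\Phi_{p,\alpha}(z)=\frac{\alpha}{p-1}\big((z+1)^{(p-1)/p}-1\big)\big((z+1)^{\alpha/p}-1\big)$ for $z>-1$ if $p\ne1$, $\Phi_{1,\alpha}(z)=\alpha\log(z+1)\big((z+1)^\alpha-1\big)$ for $z>-1$ (the limit $p\to1$), and $\Phi_{p,\alpha}(z)=+\infty$ for $z\le-1$. $\Phi^*_{p,\alpha}(\xi)=\sup_z\{\xi z-\Phi_{p,\alpha}(z)\}$. *)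

(* Defs.v *)
From Stdlib Require Import Reals.
From Coquelicot Require Import Coquelicot.
Open Scope R_scope.

Definition Phi (p alpha : R) (z : R) : Rbar :=
  if Rlt_dec (-1) z then
    if Req_EM_T p 1 then
      Finite (alpha * ln (z + 1) * (Rpower (z + 1) alpha - 1))
    else
      Finite (alpha / (p - 1) * (Rpower (z + 1) ((p - 1) / p) - 1)
                              * (Rpower (z + 1) (alpha / p) - 1))
  else p_infty.

(* Legendre transform Phi^*(xi) = sup_z { xi z - Phi(z) } in R u {+oo}.
   Values xi z - Phi z = -oo (z <= -1) do not contribute to the sup. *)
Definition PhiStar (p alpha : R) (xi : R) : Rbar :=
  Lub_Rbar (fun y : R => exists z : R,
    Finite y = Rbar_minus (Finite (xi * z)) (Phi p alpha z)).

(* \hat M_{p,alpha} = sup { alpha^2/(4p^2) * z^2 / Phi(z) : z <> 0 },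
   with the convention c / (+oo) = 0. *)
Definition Mhat (p alpha : R) : Rbar :=
  Lub_Rbar (fun y : R => exists z : R, z <> 0 /\
    Finite y = Rbar_div (Finite (alpha ^ 2 / (4 * p ^ 2) * z ^ 2)) (Phi p alpha z)).

(* Main.v *)
Require Import Defs.
From Stdlib Require Import Reals Lra Psatz.
From Coquelicot Require Import Coquelicot.
Open Scope R_scope.

Lemma expl (x y : R) : x <= y -> exp x <= exp y.
Proof. intros H; destruct (Rle_lt_or_eq_dec _ _ H) as [H1|H1].
  left; now apply exp_increasing. subst; lra. Qed.

Lemma exp1 (x : R) : 1 + x <= exp x.
Proof. apply exp_ineq1_le. Qed.

Lemma expN (x : R) : exp x * exp (- x) = 1.
Proof. rewrite <- exp_plus. replace (x + - x) with 0 by lra. apply exp_0. Qed.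

Lemma exp_pos' x : 0 < exp x. Proof. apply exp_pos. Qed.

Lemma K1 (x : R) : x^2 * exp (- Rabs x) <= x * (exp x - 1).
Proof.
  destruct (Rle_or_lt 0 x) as [H|H].
  - rewrite Rabs_pos_eq by lra.
    pose proof (exp1 x). pose proof (exp1 (-x)). pose proof (exp_pos x) .
    pose proof (exp_pos (-x)). pose proof (expN x).
    assert (exp (-x) <= 1). { assert (exp (-x) <= exp 0) by (apply expl; lra). rewrite exp_0 in H5; lra. }
    nra.
  - rewrite Rabs_left by lra. rewrite Ropp_involutive.
    pose proof (exp1 (-x)). pose proof (exp_pos x). pose proof (exp_pos (-x)). pose proof (expN x).
    assert (1 - exp x >= - x * exp x) by nra.
    nra.
Qed.

Lemma K2 (x : R) : x * (exp x - 1) <= x^2 * exp (Rabs x).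
Proof.
  destruct (Rle_or_lt 0 x) as [H|H].
  - rewrite Rabs_pos_eq by lra.
    pose proof (exp1 (-x)). pose proof (exp_pos x). pose proof (exp_pos (-x)). pose proof (expN x).
    assert (exp x - 1 <= x * exp x) by nra. nra.
  - rewrite Rabs_left by lra.
    pose proof (exp1 x). pose proof (exp_pos x). pose proof (exp1 (-x)).
    nra.
Qed.

Lemma Esq_hi (x : R) : (exp x - 1)^2 <= x^2 * exp (2 * Rabs x).
Proof.
  replace (2 * Rabs x) with (Rabs x + Rabs x) by lra. rewrite exp_plus.
  destruct (Rle_or_lt 0 x) as [H|H].
  - rewrite Rabs_pos_eq by lra.
    pose proof (exp1 (-x)). pose proof (exp_pos x). pose proof (exp_pos (-x)). pose proof (expN x).
    pose proof (exp1 x).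
    assert (exp x - 1 <= x * exp x) by nra. nra.
  - rewrite Rabs_left by lra.
    pose proof (exp1 x). pose proof (exp_pos x). pose proof (exp1 (-x)).
    assert (exp x <= 1). { assert (exp x <= exp 0) by (apply expl; lra). rewrite exp_0 in H3; lra. }
    assert (0 <= 1 - exp x <= - x) by lra.
    assert ((exp x - 1)^2 <= x^2) by nra.
    assert (1 <= exp (-x) * exp (-x)) by nra. nra.
Qed.

Lemma Esq_lo (x : R) : x^2 * exp (- (2 * Rabs x)) <= (exp x - 1)^2.
Proof.
  replace (- (2 * Rabs x)) with (- Rabs x + - Rabs x) by lra. rewrite exp_plus.
  destruct (Rle_or_lt 0 x) as [H|H].
  - rewrite Rabs_pos_eq by lra.
    pose proof (exp1 x). pose proof (exp_pos (-x)).
    assert (exp (-x) <= 1). { assert (exp (-x) <= exp 0) by (apply expl; lra). rewrite exp_0 in H2; lra. }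
    assert (x * exp (-x) <= exp x - 1) by nra.
    assert (0 <= x * exp (-x)) by nra. nra.
  - rewrite Rabs_left by lra. rewrite Ropp_involutive.
    pose proof (exp1 (-x)). pose proof (exp_pos x). pose proof (exp_pos (-x)). pose proof (expN x).
    assert (1 - exp x >= - x * exp x) by nra.
    assert (0 <= - x * exp x) by nra. nra.
Qed.

Definition Fh (p alpha h : R) : R :=
  if Req_EM_T p 1 then alpha * h * (exp (alpha * h) - 1)
  else alpha / (p - 1) * (exp ((p - 1) / p * h) - 1) * (exp (alpha / p * h) - 1).

Lemma Phi_eq p alpha z : -1 < z -> Phi p alpha z = Finite (Fh p alpha (ln (z + 1))).
Proof.
  intros Hz. unfold Phi, Fh, Rpower.
  destruct (Rlt_dec (-1) z); [|lra]. destruct (Req_EM_T p 1); reflexivity.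
Qed.

Lemma Phi_le p alpha z : z <= -1 -> Phi p alpha z = p_infty.
Proof. intros Hz. unfold Phi. destruct (Rlt_dec (-1) z); [lra|reflexivity]. Qed.

Lemma prod_bounds (X Y xl yl xh yh : R) : 0 <= xl <= X -> 0 <= yl <= Y -> X <= xh -> Y <= yh ->
  xl * yl <= X * Y <= xh * yh.
Proof. intros. split; nra. Qed.

Lemma F_bounds p alpha h : 0 < p -> 0 < alpha ->
  let a := (p - 1) / p in let b := alpha / p in let K := Rabs a + b in
  (alpha/p)^2 * h^2 * exp (- (K * Rabs h)) <= Fh p alpha h <= (alpha/p)^2 * h^2 * exp (K * Rabs h).
Proof.
  intros Hp Ha a b K.
  assert (Hb : 0 < b) by (unfold b; apply Rdiv_lt_0_compat; lra).
  pose proof (K1 (b*h)) as Y1. pose proof (K2 (b*h)) as Y2.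
  rewrite Rabs_mult, (Rabs_pos_eq b) in Y1, Y2 by lra.
  unfold Fh. destruct (Req_EM_T p 1) as [E1|E1].
  - subst p. assert (a = 0) by (unfold a; field). unfold K. rewrite H, Rabs_R0, Rplus_0_l.
    replace (alpha / 1) with b by (unfold b; reflexivity).
    assert (alpha = b) by (unfold b; field). rewrite <- H0 in *.
    split; nra.
  - pose proof (K1 (a*h)) as X1. pose proof (K2 (a*h)) as X2.
    rewrite Rabs_mult in X1, X2.
    assert (Ha0 : a <> 0). { unfold a. intro E. apply E1. unfold Rdiv in E.
       apply Rmult_integral in E. destruct E as [E|E]. lra. pose proof (Rinv_neq_0_compat p). lra. }
    destruct (Req_dec h 0) as [Hh|Hh].
    { subst h. rewrite !Rmult_0_r, exp_0. split; right; ring. }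
    assert (Hah : 0 < a^2 * h^2). { assert (0 < a*a) by (apply Rsqr_pos_lt; auto).
        assert (0 < h*h) by (apply Rsqr_pos_lt; auto). nra. }
    set (F := alpha / (p - 1) * (exp ((p - 1) / p * h) - 1) * (exp (alpha / p * h) - 1)).
    assert (EF : a^2 * h^2 * F = (a*h*(exp (a*h) - 1)) * (b*h*(exp (b*h)-1))).
    { unfold F, a, b. field. split; lra. }
    assert (Ek : exp (- (K * Rabs h)) = exp (- (Rabs a * Rabs h)) * exp (- (b * Rabs h))).
    { rewrite <- exp_plus. f_equal. unfold K; ring. }
    assert (Ek' : exp ((K * Rabs h)) = exp ((Rabs a * Rabs h)) * exp ((b * Rabs h))).
    { rewrite <- exp_plus. f_equal. unfold K; ring. }
    pose proof (exp_pos (- (Rabs a * Rabs h))). pose proof (exp_pos (- (b * Rabs h))).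
    pose proof (exp_pos ((Rabs a * Rabs h))). pose proof (exp_pos ((b * Rabs h))).
    assert (0 <= (a * h) ^ 2 * exp (- (Rabs a * Rabs h))) by (apply Rmult_le_pos; [apply pow2_ge_0|lra]).
    assert (0 <= (b * h) ^ 2 * exp (- (b * Rabs h))) by (apply Rmult_le_pos; [apply pow2_ge_0|lra]).
    destruct (prod_bounds _ _ _ _ _ _ (conj H3 X1) (conj H4 Y1) X2 Y2) as [L U].
    rewrite <- EF in L, U.
    split.
    + apply (Rmult_le_reg_l (a^2*h^2)); auto. rewrite Ek.
      replace (a ^ 2 * h ^ 2 * ((alpha / p) ^ 2 * h ^ 2 * (exp (- (Rabs a * Rabs h)) * exp (- (b * Rabs h)))))
        with ((a * h) ^ 2 * exp (- (Rabs a * Rabs h)) * ((b * h) ^ 2 * exp (- (b * Rabs h)))) by (unfold b; ring).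
      exact L.
    + apply (Rmult_le_reg_l (a^2*h^2)); auto. rewrite Ek'.
      replace (a ^ 2 * h ^ 2 * ((alpha / p) ^ 2 * h ^ 2 * (exp ((Rabs a * Rabs h)) * exp ((b * Rabs h)))))
        with ((a * h) ^ 2 * exp ((Rabs a * Rabs h)) * ((b * h) ^ 2 * exp ((b * Rabs h)))) by (unfold b; ring).
      exact U.
Qed.

Lemma le_div (x y F : R) : 0 < F -> y * F <= x -> y <= x / F.
Proof. intros HF H. apply (Rmult_le_reg_r F); auto. replace (x / F * F) with x by (field; lra). exact H. Qed.
Lemma div_le (x y F : R) : 0 < F -> x <= y * F -> x / F <= y.
Proof. intros HF H. apply (Rmult_le_reg_r F); auto. replace (x / F * F) with x by (field; lra). exact H. Qed.

Definition rr p alpha h := alpha ^ 2 / (4 * p ^ 2) * (exp h - 1) ^ 2 / Fh p alpha h.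

Lemma F_pos p alpha h : 0 < p -> 0 < alpha -> h <> 0 -> 0 < Fh p alpha h.
Proof.
  intros Hp Ha Hh. destruct (F_bounds p alpha h Hp Ha) as [L _].
  eapply Rlt_le_trans; [|exact L].
  assert (0 < alpha/p) by (apply Rdiv_lt_0_compat; lra).
  assert (0 < h*h) by (apply Rsqr_pos_lt; auto).
  pose proof (exp_pos (- ((Rabs ((p - 1) / p) + alpha / p) * Rabs h))).
  assert (0 < (alpha/p)^2) by (apply pow_lt; lra).
  apply Rmult_lt_0_compat; [apply Rmult_lt_0_compat|]; auto. simpl; nra.
Qed.

Lemma rr_bounds p alpha h : 0 < p -> 0 < alpha -> h <> 0 ->
  let K := 2 + (Rabs ((p - 1) / p) + alpha / p) in
  /4 * exp (- (K * Rabs h)) <= rr p alpha h <= /4 * exp (K * Rabs h).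
Proof.
  intros Hp Ha Hh K.
  pose proof (F_pos p alpha h Hp Ha Hh) as FP.
  destruct (F_bounds p alpha h Hp Ha) as [L U].
  set (K0 := Rabs ((p - 1) / p) + alpha / p) in *.
  set (F := Fh p alpha h) in *.
  pose proof (Esq_hi h). pose proof (Esq_lo h).
  assert (E1 : exp (K * Rabs h) * exp (- (K0 * Rabs h)) = exp (2 * Rabs h)).
  { rewrite <- exp_plus. f_equal. unfold K. ring. }
  assert (E2 : exp (- (K * Rabs h)) * exp ((K0 * Rabs h)) = exp (- (2 * Rabs h))).
  { rewrite <- exp_plus. f_equal. unfold K. ring. }
  assert (Hc : alpha ^ 2 / (4 * p ^ 2) = /4 * (alpha/p)^2) by (field; lra).
  assert (0 < (alpha/p)^2) by (apply pow_lt; apply Rdiv_lt_0_compat; lra).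
  pose proof (exp_pos (K * Rabs h)). pose proof (exp_pos (-(K * Rabs h))).
  unfold rr; fold F. rewrite Hc.
  split.
  - apply le_div; auto.
    apply Rle_trans with (/4 * exp (- (K * Rabs h)) * ((alpha / p) ^ 2 * h ^ 2 * exp ((K0 * Rabs h)))).
    + apply Rmult_le_compat_l; [nra|exact U].
    + replace (/ 4 * exp (- (K * Rabs h)) * ((alpha / p) ^ 2 * h ^ 2 * exp (K0 * Rabs h)))
        with (/ 4 * (alpha / p) ^ 2 * (h^2 * (exp (- (K * Rabs h)) * exp (K0 * Rabs h)))) by ring.
      rewrite E2. apply Rmult_le_compat_l; [nra|]. lra.
  - apply div_le; auto.
    apply Rle_trans with (/4 * exp ((K * Rabs h)) * ((alpha / p) ^ 2 * h ^ 2 * exp (- (K0 * Rabs h)))).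
    + replace (/ 4 * exp ((K * Rabs h)) * ((alpha / p) ^ 2 * h ^ 2 * exp (- (K0 * Rabs h))))
        with (/ 4 * (alpha / p) ^ 2 * (h^2 * (exp ((K * Rabs h)) * exp (- (K0 * Rabs h))))) by ring.
      rewrite E1. apply Rmult_le_compat_l; [nra|]. lra.
    + apply Rmult_le_compat_l; [nra|exact L].
Qed.

Definition Lf a h := if Req_EM_T a 0 then h else (exp (a*h) - 1) / a.

Lemma F_L p alpha h : 0 < p -> Fh p alpha h = (alpha/p) * Lf ((p-1)/p) h * (exp (alpha/p*h) - 1).
Proof.
  intros Hp. unfold Fh, Lf. destruct (Req_EM_T p 1) as [E|E]; destruct (Req_EM_T ((p-1)/p) 0) as [E'|E'].
  - subst. replace (alpha/1) with alpha by field. ring.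
  - subst. exfalso; apply E'; field.
  - exfalso. apply E. unfold Rdiv in E'. apply Rmult_integral in E'. destruct E' as [E'|E']. lra.
    pose proof (Rinv_neq_0_compat p). lra.
  - field. split; lra.
Qed.

Lemma Lf_mono a h1 h2 : h1 <= h2 -> Lf a h1 <= Lf a h2.
Proof.
  intros H. unfold Lf. destruct (Req_EM_T a 0) as [E|E]; auto.
  destruct (Rle_or_lt 0 a) as [Ha|Ha].
  - assert (0 < a) by lra. apply Rmult_le_compat_r. left; apply Rinv_0_lt_compat; auto.
    assert (exp (a*h1) <= exp (a*h2)) by (apply expl; nra). lra.
  - assert (exp (a*h2) <= exp (a*h1)) by (apply expl; nra).
    unfold Rdiv. assert (/a < 0) by (apply Rinv_lt_0_compat; auto). nra.
Qed.

Lemma Lf_1 a : 0 < Lf a 1.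
Proof.
  unfold Lf. destruct (Req_EM_T a 0) as [E|E]; [lra|].
  destruct (Rle_or_lt 0 a) as [Ha|Ha].
  - assert (0 < a) by lra. apply Rdiv_lt_0_compat; auto.
    assert (exp 0 < exp (a*1)) by (apply exp_increasing; lra). rewrite exp_0 in H0; lra.
  - assert (exp (a*1) < exp 0) by (apply exp_increasing; lra). rewrite exp_0 in H.
    unfold Rdiv. assert (/a < 0) by (apply Rinv_lt_0_compat; auto). nra.
Qed.

Lemma Lf_m1 a : Lf a (-1) < 0.
Proof.
  unfold Lf. destruct (Req_EM_T a 0) as [E|E]; [lra|].
  destruct (Rle_or_lt 0 a) as [Ha|Ha].
  - assert (0 < a) by lra.
    assert (exp (a*-1) < exp 0) by (apply exp_increasing; lra). rewrite exp_0 in H0.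
    unfold Rdiv. assert (0 < /a) by (apply Rinv_0_lt_compat; auto). nra.
  - assert (exp 0 < exp (a*-1)) by (apply exp_increasing; lra). rewrite exp_0 in H.
    unfold Rdiv. assert (/a < 0) by (apply Rinv_lt_0_compat; auto). nra.
Qed.

Lemma G1 c h : 0 < c -> 1 <= h -> (1 - exp (- c)) * exp (c*h) <= exp (c*h) - 1.
Proof.
  intros Hc Hh. assert (exp (-c) * exp (c*h) = exp (c*h - c)) by (rewrite <- exp_plus; f_equal; ring).
  assert (exp 0 <= exp (c*h - c)) by (apply expl; nra). rewrite exp_0 in H0. nra.
Qed.

Lemma em_lt1 c : 0 < c -> 0 < 1 - exp (- c).
Proof. intros. assert (exp (-c) < exp 0) by (apply exp_increasing; lra). rewrite exp_0 in H0; lra. Qed.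

Lemma Fh_big p alpha : 0 < p -> 0 < alpha ->
  (2 <= alpha/p \/ (0 < (p-1)/p /\ 2 <= (p-1)/p + alpha/p)) ->
  exists c1, 0 < c1 /\ forall h, 1 <= h -> c1 * exp (2*h) <= Fh p alpha h.
Proof.
  intros Hp Ha Hc. set (a := (p-1)/p). set (b := alpha/p). fold a b in Hc.
  assert (Hb : 0 < b) by (unfold b; apply Rdiv_lt_0_compat; lra).
  pose proof (em_lt1 b Hb) as Eb.
  destruct Hc as [Hc|[Ha0 Hc]].
  - exists (b * Lf a 1 * (1 - exp (- b))). split.
    + pose proof (Lf_1 a). apply Rmult_lt_0_compat; auto. apply Rmult_lt_0_compat; auto.
    + intros h Hh. rewrite F_L by auto. fold a b.
      pose proof (G1 b h Hb Hh). pose proof (Lf_mono a 1 h Hh). pose proof (Lf_1 a).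
      assert (exp (2*h) <= exp (b*h)) by (apply expl; nra).
      pose proof (exp_pos (2*h)).
      assert ((1 - exp (- b)) * exp (2*h) <= exp (b*h) - 1) by nra.
      assert (0 <= (1 - exp (- b)) * exp (2*h)) by nra.
      replace (b * Lf a 1 * (1 - exp (- b)) * exp (2 * h)) with (b * (Lf a 1 * ((1 - exp (- b)) * exp (2 * h)))) by ring.
      rewrite Rmult_assoc. apply Rmult_le_compat_l; [lra|].
      apply Rmult_le_compat; lra.
  - exists (b / a * (1 - exp (-a)) * (1 - exp (- b))). pose proof (em_lt1 a Ha0) as Ea. split.
    + apply Rmult_lt_0_compat; auto. apply Rmult_lt_0_compat; auto. apply Rdiv_lt_0_compat; auto.
    + intros h Hh. unfold Fh. destruct (Req_EM_T p 1) as [E|E].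
      { exfalso. unfold a in Ha0. rewrite E in Ha0. lra. }
      fold a b. replace (alpha / (p - 1)) with (b / a) by (unfold a, b; field; split; lra).
      pose proof (G1 b h Hb Hh). pose proof (G1 a h Ha0 Hh).
      assert (exp (2*h) <= exp (a*h) * exp (b*h)) by (rewrite <- exp_plus; apply expl; nra).
      pose proof (exp_pos (2*h)). pose proof (exp_pos (a*h)). pose proof (exp_pos (b*h)).
      assert (0 < b/a) by (apply Rdiv_lt_0_compat; auto).
      replace (b / a * (1 - exp (- a)) * (1 - exp (- b)) * exp (2 * h))
        with (b / a * ((1 - exp (- a)) * (1 - exp (- b)) * exp (2 * h))) by ring.
      replace (b / a * (exp (a * h) - 1) * (exp (b * h) - 1)) with (b / a * ((exp (a * h) - 1) * (exp (b * h) - 1))) by ring.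
      apply Rmult_le_compat_l; [lra|].
      apply Rle_trans with (((1 - exp (- a)) * exp (a*h)) * ((1 - exp (- b)) * exp (b*h))).
      * assert (0 < (1 - exp (- a)) * (1 - exp (- b))) by nra. nra.
      * apply Rmult_le_compat; nra.
Qed.

Lemma Fh_neg p alpha : 0 < p -> 0 < alpha ->
  exists c2, 0 < c2 /\ forall h, h <= -1 -> c2 <= Fh p alpha h.
Proof.
  intros Hp Ha. set (a := (p-1)/p). set (b := alpha/p).
  assert (Hb : 0 < b) by (unfold b; apply Rdiv_lt_0_compat; lra).
  pose proof (em_lt1 b Hb) as Eb. pose proof (Lf_m1 a).
  exists (b * (- Lf a (-1)) * (1 - exp (-b))). split.
  - apply Rmult_lt_0_compat; auto. apply Rmult_lt_0_compat; lra.
  - intros h Hh. rewrite F_L by auto. fold a b.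
    pose proof (Lf_mono a h (-1) Hh).
    assert (exp (b*h) <= exp (-b)) by (apply expl; nra).
    replace (b * Lf a h * (exp (b * h) - 1)) with (b * ((- Lf a h) * (1 - exp (b * h)))) by ring.
    rewrite Rmult_assoc. apply Rmult_le_compat_l; [lra|].
    apply Rmult_le_compat; lra.
Qed.

Lemma rr_global p alpha : 0 < p -> 0 < alpha ->
  (2 <= alpha/p \/ (0 < (p-1)/p /\ 2 <= (p-1)/p + alpha/p)) ->
  exists B, forall h, h <> 0 -> rr p alpha h <= B.
Proof.
  intros Hp Ha Hc.
  destruct (Fh_big p alpha Hp Ha Hc) as [c1 [Hc1 H1]].
  destruct (Fh_neg p alpha Hp Ha) as [c2 [Hc2 H2]].
  set (K := 2 + (Rabs ((p - 1) / p) + alpha / p)).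
  set (c := alpha ^ 2 / (4 * p ^ 2)).
  assert (Hcp : 0 < c). { unfold c. apply Rdiv_lt_0_compat. apply pow_lt; lra.
     assert (0 < p^2) by (apply pow_lt; lra). lra. }
  exists (Rmax (/4 * exp K) (Rmax (c / c1) (c / c2))).
  intros h Hh.
  pose proof (F_pos p alpha h Hp Ha Hh) as FP.
  destruct (Rle_or_lt (Rabs h) 1) as [Hs|Hs].
  - eapply Rle_trans; [|apply Rmax_l].
    destruct (rr_bounds p alpha h Hp Ha Hh) as [_ U]. fold K in U.
    eapply Rle_trans; [exact U|].
    assert (0 <= K) by (unfold K; pose proof (Rabs_pos ((p-1)/p)); assert (0 < alpha/p) by (apply Rdiv_lt_0_compat; lra); lra).
    assert (exp (K * Rabs h) <= exp K) by (apply expl; pose proof (Rabs_pos h); nra). lra.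
  - eapply Rle_trans; [|apply Rmax_r].
    unfold rr. fold c.
    destruct (Rle_or_lt 0 h) as [Hp0|Hn0].
    + rewrite Rabs_pos_eq in Hs by lra.
      eapply Rle_trans; [|apply Rmax_l]. apply div_le; auto.
      specialize (H1 h ltac:(lra)).
      assert (Ee : exp (2*h) = exp h * exp h) by (rewrite <- exp_plus; f_equal; ring).
      pose proof (exp1 h).
      assert ((exp h - 1)^2 <= exp (2*h)) by (rewrite Ee; nra).
      assert (c / c1 * Fh p alpha h >= c / c1 * (c1 * exp (2*h))).
      { apply Rle_ge, Rmult_le_compat_l; auto. left; apply Rdiv_lt_0_compat; auto. }
      replace (c / c1 * (c1 * exp (2 * h))) with (c * exp (2*h)) in H3 by (field; lra).
      assert (c * (exp h - 1)^2 <= c * exp (2*h)) by (apply Rmult_le_compat_l; lra). lra.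
    + rewrite Rabs_left in Hs by lra.
      eapply Rle_trans; [|apply Rmax_r]. apply div_le; auto.
      specialize (H2 h ltac:(lra)).
      pose proof (exp_pos h). assert (exp h <= exp 0) by (apply expl; lra). rewrite exp_0 in H0.
      assert ((exp h - 1)^2 <= 1) by nra.
      assert (c / c2 * Fh p alpha h >= c / c2 * c2).
      { apply Rle_ge, Rmult_le_compat_l; auto. left; apply Rdiv_lt_0_compat; auto. }
      replace (c / c2 * c2) with c in H4 by (field; lra).
      assert (c * (exp h - 1)^2 <= c * 1) by (apply Rmult_le_compat_l; lra). lra.
Qed.

Lemma rr_pos p alpha h : 0 < p -> 0 < alpha -> h <> 0 -> 0 < rr p alpha h.
Proof.
  intros Hp Ha Hh. destruct (rr_bounds p alpha h Hp Ha Hh) as [L _].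
  pose proof (exp_pos (- ((2 + (Rabs ((p - 1) / p) + alpha / p)) * Rabs h))). lra.
Qed.

Lemma rr_approach p alpha u : 0 < p -> 0 < alpha -> u < /4 ->
  exists h, h <> 0 /\ u < rr p alpha h.
Proof.
  intros Hp Ha Hu.
  destruct (Rle_or_lt u 0) as [Hu0|Hu0].
  - exists 1. split; [lra|]. pose proof (rr_pos p alpha 1 Hp Ha ltac:(lra)). lra.
  - set (K := 2 + (Rabs ((p - 1) / p) + alpha / p)).
    assert (HK : 0 < K) by (unfold K; pose proof (Rabs_pos ((p-1)/p)); assert (0 < alpha/p) by (apply Rdiv_lt_0_compat; lra); lra).
    assert (Hl : ln (4*u) < 0). { rewrite <- ln_1. apply ln_increasing; lra. }
    set (h := - ln (4*u) / (2*K)).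
    assert (Hh : 0 < h). { unfold h. apply Rdiv_lt_0_compat; lra. }
    exists h. split; [lra|].
    destruct (rr_bounds p alpha h Hp Ha ltac:(lra)) as [L _]. fold K in L.
    rewrite Rabs_pos_eq in L by lra.
    assert (K * h = - ln (4*u) / 2) by (unfold h; field; lra).
    rewrite H in L.
    assert (exp (ln (4*u)) < exp (- (- ln (4 * u) / 2))) by (apply exp_increasing; lra).
    rewrite exp_ln in H0 by lra. lra.
Qed.

Lemma lt_div (x y F : R) : 0 < F -> y * F < x -> y < x / F.
Proof. intros HF H. apply (Rmult_lt_reg_r F); auto. replace (x / F * F) with x by (field; lra). exact H. Qed.

Lemma Fh_half alpha h : Fh (1/2) alpha h = 2 * alpha * (1 - exp (- h)) * (exp (2 * alpha * h) - 1).
Proof.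
  unfold Fh. destruct (Req_EM_T (1/2) 1) as [E|E]; [lra|].
  replace ((1/2 - 1) / (1/2) * h) with (- h) by field.
  replace (alpha / (1/2) * h) with (2 * alpha * h) by field.
  replace (alpha / (1/2 - 1)) with (- (2 * alpha)) by field. ring.
Qed.

Lemma rr_half alpha h : 1 <= alpha -> h <> 0 -> rr (1/2) alpha h <= alpha / 2.
Proof.
  intros Ha Hh. pose proof (F_pos (1/2) alpha h ltac:(lra) ltac:(lra) Hh) as FP.
  unfold rr. apply div_le; auto. rewrite Fh_half.
  replace (alpha ^ 2 / (4 * (1 / 2) ^ 2)) with (alpha^2) by field.
  set (t := exp h). set (s := exp (-h)). set (T := exp (2*alpha*h)).
  assert (Hts : t * s = 1) by apply expN.
  assert (0 < t) by apply exp_pos. assert (0 < s) by apply exp_pos.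
  assert (Hmain : (t - 1)^2 <= (1 - s) * (T - 1)).
  { assert (E1 : 1 - s = (t - 1) * s) by nra.
    rewrite E1.
    assert (Eid : (t-1)*s*(t*t-1) = (t-1)^2*(1+s)).
    { assert ((t-1)*s*(t*t-1) - (t-1)^2*(1+s) = (t-1)^2*(t*s - 1)) by ring.
      rewrite Hts in H1. lra. }
    assert ((t-1)^2 <= (t-1)^2*(1+s)) by (pose proof (pow2_ge_0 (t-1)); nra).
    destruct (Rle_or_lt 0 h) as [Hh0|Hh0].
    - assert (t*t <= T). { unfold t, T. rewrite <- exp_plus. apply expl. nra. }
      assert (1 <= t) by (unfold t; pose proof (exp1 h); lra).
      assert ((t-1)*s*(T-1) >= (t-1)*s*(t*t-1)).
      { apply Rle_ge. apply Rmult_le_compat_l; [|lra]. apply Rmult_le_pos; lra. }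
      nra.
    - assert (T <= t*t). { unfold t, T. rewrite <- exp_plus. apply expl. nra. }
      assert (t <= 1). { unfold t. pose proof (expl h 0 ltac:(lra)) as Q. rewrite exp_0 in Q; lra. }
      assert ((t-1)*s*(T-1) >= (t-1)*s*(t*t-1)).
      { apply Rle_ge. replace ((t - 1) * s * (t * t - 1)) with ((1-t)*s*(1 - t*t)) by ring.
        replace ((t - 1) * s * (T - 1)) with ((1-t)*s*(1 - T)) by ring.
        apply Rmult_le_compat_l; [|lra]. apply Rmult_le_pos; lra. }
      nra. }
  assert (0 < alpha^2) by (apply pow_lt; lra).
  replace (alpha / 2 * (2 * alpha * (1 - s) * (T - 1))) with (alpha^2 * ((1 - s) * (T - 1))) by field.
  apply Rmult_le_compat_l; lra.
Qed.

Lemma rr_half1_approach u : u < 1/2 -> exists h, h <> 0 /\ u < rr (1/2) 1 h.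
Proof.
  intros Hu. destruct (Rle_or_lt u 0) as [Hu0|Hu0].
  - exists 1. split; [lra|]. pose proof (rr_pos (1/2) 1 1 ltac:(lra) ltac:(lra) ltac:(lra)). lra.
  - set (t := 1 / (1 - 2*u)).
    assert (Ht : 1 < t). { unfold t. apply (Rmult_lt_reg_r (1 - 2*u)); [lra|]. field_simplify; lra. }
    exists (ln t). assert (Hh : ln t <> 0). { assert (ln 1 < ln t) by (apply ln_increasing; lra). rewrite ln_1 in H; lra. }
    split; auto.
    pose proof (F_pos (1/2) 1 (ln t) ltac:(lra) ltac:(lra) Hh) as FP.
    unfold rr. apply lt_div; auto. rewrite Fh_half in *.
    rewrite exp_ln by lra. rewrite exp_Ropp, exp_ln by lra.
    replace (2 * 1 * ln t) with (ln t + ln t) by ring. rewrite exp_plus, exp_ln by lra.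
    replace (1 ^ 2 / (4 * (1 / 2) ^ 2)) with 1 by field.
    assert (t * (1 - 2*u) = 1) by (unfold t; field; lra).
    replace (u * (2 * 1 * (1 - / t) * (t * t - 1))) with (2 * u * (t - 1)^2 * (t + 1) / t) by (field; lra).
    assert (0 < (t-1)^2) by (apply pow_lt; lra).
    apply (Rmult_lt_reg_r t); [lra|].
    replace (2 * u * (t - 1) ^ 2 * (t + 1) / t * t) with ((t-1)^2 * (2*u*(t+1))) by (field; lra).
    replace (1 * (t - 1) ^ 2 * t) with ((t-1)^2 * t) by ring.
    apply Rmult_lt_compat_l; auto. nra.
Qed.

Definition Sh y := exp y - exp (- y).
Definition Ch y := exp y + exp (- y).

Lemma Ch_mono u v : 0 <= u <= v -> Ch u <= Ch v.
Proof.
  intros H. unfold Ch.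
  assert (exp u <= exp v) by (apply expl; lra).
  assert (exp (-u) * exp (-v) <= 1). { rewrite <- exp_plus. pose proof (expl (-u + -v) 0 ltac:(lra)). rewrite exp_0 in H1; lra. }
  pose proof (expN u) as Nu. pose proof (expN v) as Nv. pose proof (exp_pos u). pose proof (exp_pos v).
  pose proof (exp_pos (-u)). pose proof (exp_pos (-v)).
  assert (exp v + exp (-v) - (exp u + exp (-u)) = (exp v - exp u) * (1 - exp (-u) * exp (-v))).
  { replace ((exp v - exp u) * (1 - exp (- u) * exp (- v))) with
      (exp v - exp u - exp (-u) * (exp v * exp (-v)) + (exp u * exp (-u)) * exp (-v)) by ring.
    rewrite Nu, Nv. ring. }
  nra.
Qed.

Lemma Sh_conv d y : 0 <= d <= 1 -> 0 <= y -> Sh (d*y) <= d * Sh y.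
Proof.
  intros Hd Hy. destruct (Rle_lt_or_eq_dec _ _ Hy) as [Hy'|Hy']; [|subst; unfold Sh; rewrite Rmult_0_r, Ropp_0, exp_0; lra].
  set (g := fun y => d * Sh y - Sh (d*y)).
  set (g' := fun y => d * Ch y - d * Ch (d*y)).
  assert (Hd' : forall c, derivable_pt_lim g c (g' c)).
  { intro c. apply is_derive_Reals. unfold g, g', Sh, Ch. auto_derive; [trivial|ring]. }
  destruct (MVT_cor2 g g' 0 y Hy' (fun c _ => Hd' c)) as [c [Hc1 Hc2]].
  assert (g 0 = 0) by (unfold g, Sh; rewrite Rmult_0_r, Ropp_0, exp_0; ring).
  assert (0 <= g' c). { unfold g'. assert (Ch (d*c) <= Ch c) by (apply Ch_mono; nra). nra. }
  assert (0 <= g y) by nra. unfold g in H1. lra.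
Qed.

Lemma Ch_Sh x : Ch x - 2 = (Sh (x/2))^2.
Proof.
  unfold Ch, Sh. replace x with (x/2 + x/2) at 1 by field. replace (-x) with (-(x/2) + -(x/2)) by field.
  rewrite !exp_plus. pose proof (expN (x/2)). nra.
Qed.

Lemma Sh_odd y : Sh (- y) = - Sh y.
Proof. unfold Sh. rewrite Ropp_involutive. ring. Qed.

Lemma F1 d x : 0 <= d <= 1 -> Ch (d*x) - 2 <= d^2 * (Ch x - 2).
Proof.
  intros Hd. rewrite !Ch_Sh.
  set (y := x/2). replace (d*x/2) with (d*y) by (unfold y; field).
  assert (Hgen : forall y, 0 <= y -> (Sh (d*y))^2 <= d^2 * (Sh y)^2).
  { intros z Hz. pose proof (Sh_conv d z Hd Hz).
    assert (0 <= Sh (d*z)). { unfold Sh. pose proof (expl (-(d*z)) (d*z) ltac:(nra)). lra. }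
    nra. }
  destruct (Rle_or_lt 0 y) as [H|H]; auto.
  replace (d*y) with (-(d*(-y))) by ring. rewrite Sh_odd.
  replace (Sh y) with (- Sh (-y)) by (rewrite Sh_odd; ring).
  replace ((- Sh (d * - y)) ^ 2) with ((Sh (d * - y)) ^ 2) by ring.
  replace ((- Sh (- y)) ^ 2) with ((Sh (- y)) ^ 2) by ring.
  apply Hgen; lra.
Qed.

Lemma G_sign h : 0 <= (exp h - 1) * (h * (exp h + 1) - 2 * (exp h - 1)).
Proof.
  set (g := fun h => h * (exp h + 1) - 2 * (exp h - 1)).
  set (g' := fun h => 1 - exp h + h * exp h).
  assert (Hd' : forall c, derivable_pt_lim g c (g' c)).
  { intro c. apply is_derive_Reals. unfold g, g'. auto_derive; [trivial|ring]. }
  assert (Hg' : forall c, 0 <= g' c).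
  { intro c. unfold g'. pose proof (exp1 (-c)). pose proof (expN c). pose proof (exp_pos c). nra. }
  assert (g0 : g 0 = 0) by (unfold g; rewrite exp_0; ring).
  change (0 <= (exp h - 1) * g h).
  destruct (Rtotal_order 0 h) as [H|[H|H]].
  - destruct (MVT_cor2 g g' 0 h H (fun c _ => Hd' c)) as [c [Hc1 Hc2]].
    specialize (Hg' c). assert (0 <= g h) by nra.
    pose proof (exp1 h). nra.
  - subst. rewrite g0. lra.
  - destruct (MVT_cor2 g g' h 0 H (fun c _ => Hd' c)) as [c [Hc1 Hc2]].
    specialize (Hg' c). assert (g h <= 0) by nra.
    pose proof (expl h 0 ltac:(lra)). rewrite exp_0 in H1. nra.
Qed.

Lemma rr_p1 p h : 0 < p -> h <> 0 -> rr p (p+1) h <= /4.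
Proof.
  intros Hp Hh. pose proof (F_pos p (p+1) h Hp ltac:(lra) Hh) as FP.
  unfold rr. apply div_le; auto.
  set (b := (p+1)/p). set (d := /p).
  assert (Hc : (p + 1) ^ 2 / (4 * p ^ 2) = /4 * b^2) by (unfold b; field; lra).
  rewrite Hc.
  assert (Hb : 0 < b) by (unfold b; apply Rdiv_lt_0_compat; lra).
  assert (0 < b^2) by (apply pow_lt; lra).
  cut (b^2 * (exp h - 1)^2 <= Fh p (p+1) h). { intro; nra. }
  unfold Fh. destruct (Req_EM_T p 1) as [E1|E1].
  - subst p. assert (b = 2) by (unfold b; field). rewrite H0.
    replace (1 + 1) with 2 by ring.
    pose proof (G_sign h).
    replace (exp (2*h)) with (exp h * exp h) by (rewrite <- exp_plus; f_equal; ring).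
    nra.
  - set (a := (p-1)/p).
    assert (Ea : a = 1 - d) by (unfold a, d; field; lra).
    assert (Eb : b = 1 + d) by (unfold b, d; field; lra).
    assert (Hd : 0 < d) by (unfold d; apply Rinv_0_lt_compat; lra).
    replace ((p + 1) / p) with b by reflexivity. fold a.
    assert (Ha0 : a <> 0). { intro Q. apply E1. unfold a in Q. apply (Rmult_eq_reg_r (/p)). 2: apply Rinv_neq_0_compat; lra.
      unfold Rdiv in Q. lra. }
    replace ((p + 1) / (p - 1)) with (b / a) by (unfold a, b; field; split; lra).
    set (x := exp h). set (y := exp (-h)). set (u := exp (d*h)). set (w := exp (-(d*h))).
    assert (Hxy : x * y = 1) by apply expN. assert (Huw : u * w = 1) by apply expN.
    assert (Eah : exp (a*h) = x * w) by (unfold x, w; rewrite <- exp_plus; f_equal; rewrite Ea; ring).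
    assert (Ebh : exp (b*h) = x * u) by (unfold x, u; rewrite <- exp_plus; f_equal; rewrite Eb; ring).
    rewrite Eah, Ebh.
    assert (I1 : (x * w - 1) * (x * u - 1) = x * ((x + y) - (u + w))).
    { replace ((x * w - 1) * (x * u - 1)) with (x*x*(u*w) - x*w - x*u + 1) by ring.
      rewrite Huw. replace (x * ((x + y) - (u + w))) with (x*x + x*y - x*u - x*w) by ring. rewrite Hxy. ring. }
    assert (I2 : (x - 1)^2 = x * ((x + y) - 2)).
    { replace (x * ((x + y) - 2)) with (x*x + x*y - 2*x) by ring. rewrite Hxy. ring. }
    assert (Hx : 0 < x) by apply exp_pos.
    replace (b / a * (x * w - 1) * (x * u - 1)) with (b / a * ((x * w - 1) * (x * u - 1))) by ring.
    rewrite I1, I2.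
    change (x + y) with (Ch h). change (u + w) with (Ch (d*h)).
    assert (Cg : 0 <= Ch h - 2) by (rewrite Ch_Sh; apply pow2_ge_0).
    destruct (Rlt_le_dec d 1) as [Hd1|Hd1].
    + pose proof (F1 d h ltac:(lra)).
      assert (0 < a) by lra.
      assert (b^2 * (Ch h - 2) <= b / a * (Ch h - Ch (d * h))).
      { apply (Rmult_le_reg_l a); auto.
        replace (a * (b / a * (Ch h - Ch (d * h)))) with (b * (Ch h - Ch (d * h))) by (field; lra).
        rewrite Ea, Eb. rewrite Ea in H1. nra. }
      replace (b / a * (x * (Ch h - Ch (d * h)))) with (x * (b / a * (Ch h - Ch (d * h)))) by ring.
      replace (b ^ 2 * (x * (Ch h - 2))) with (x * (b ^ 2 * (Ch h - 2))) by ring.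
      apply Rmult_le_compat_l; lra.
    + assert (d <> 1). { intro Q. apply Ha0. rewrite Ea, Q. ring. }
      assert (a < 0) by lra.
      assert (/d <= 1) by (apply (Rmult_le_reg_l d); [lra|]; rewrite Rinv_r; lra).
      assert (0 < /d) by (apply Rinv_0_lt_compat; lra).
      pose proof (F1 (/d) (d*h) ltac:(lra)) as HF.
      replace (/d * (d*h)) with h in HF by (field; lra).
      assert (Ch h - 2 <= /d^2 * (Ch (d*h) - 2)) by (replace (/d^2) with ((/d)^2) by (field; lra); exact HF).
      assert (d^2 * (Ch h - 2) <= Ch (d*h) - 2).
      { apply (Rmult_le_reg_l (/d^2)). apply Rinv_0_lt_compat; nra.
        replace (/ d ^ 2 * (d ^ 2 * (Ch h - 2))) with (Ch h - 2) by (field; lra). exact H4. }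
      assert (b^2 * (Ch h - 2) <= b / a * (Ch h - Ch (d * h))).
      { apply (Rmult_le_reg_l (-a)); [lra|].
        replace (- a * (b / a * (Ch h - Ch (d * h)))) with (b * (Ch (d * h) - Ch h)) by (field; lra).
        rewrite Ea, Eb. nra. }
      replace (b / a * (x * (Ch h - Ch (d * h)))) with (x * (b / a * (Ch h - Ch (d * h)))) by ring.
      replace (b ^ 2 * (x * (Ch h - 2))) with (x * (b ^ 2 * (Ch h - 2))) by ring.
      apply Rmult_le_compat_l; lra.
Qed.

Definition SS p alpha := fun y : R => exists z : R, z <> 0 /\
    Finite y = Rbar_div (Finite (alpha ^ 2 / (4 * p ^ 2) * z ^ 2)) (Phi p alpha z).

Lemma S_char p alpha y : SS p alpha y -> y = 0 \/ exists h, h <> 0 /\ y = rr p alpha h.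
Proof.
  intros [z [Hz E]]. destruct (Rle_or_lt z (-1)) as [H1|H1].
  - left. rewrite Phi_le in E by auto. simpl in E. injection E. intros ->. ring.
  - right. rewrite Phi_eq in E by auto. simpl in E. injection E. intros ->.
    exists (ln (z+1)). split.
    + intro Q. apply Hz. assert (exp (ln (z+1)) = exp 0) by (rewrite Q; reflexivity).
      rewrite exp_ln, exp_0 in H by lra. lra.
    + unfold rr. rewrite exp_ln by lra. replace (z + 1 - 1) with z by ring. reflexivity.
Qed.

Lemma S_intro p alpha h : h <> 0 -> SS p alpha (rr p alpha h).
Proof.
  intros Hh. exists (exp h - 1). split.
  - intro Q. apply Hh. assert (exp h = exp 0) by (rewrite exp_0; lra). now apply exp_inv.
  - pose proof (exp_pos h). rewrite Phi_eq by lra. replace (exp h - 1 + 1) with (exp h) by ring.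
    rewrite ln_exp. reflexivity.
Qed.

Lemma lub_fin (S : R -> Prop) B y0 : (forall y, S y -> y <= B) -> S y0 ->
  exists M, Lub_Rbar S = Finite M /\ (forall y, S y -> y <= M) /\
    (forall B', (forall y, S y -> y <= B') -> M <= B').
Proof.
  intros HB Hy0. destruct (Lub_Rbar_correct S) as [ub lub].
  destruct (Lub_Rbar S) as [M| |] eqn:EL.
  - exists M. split; auto. split.
    + intros y Hy. exact (ub y Hy).
    + intros B' HB'. exact (lub (Finite B') HB').
  - exfalso. exact (lub (Finite B) HB).
  - exfalso. exact (ub y0 Hy0).
Qed.

Lemma Fh0 p alpha : Fh p alpha 0 = 0.
Proof. unfold Fh. destruct (Req_EM_T p 1); rewrite !Rmult_0_r, exp_0; ring. Qed.

Theorem mainTheorem12 :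
  forall alpha p : R, 0 < alpha -> 0 < p -> p <= Rmax (alpha / 2) (alpha - 1) ->
    (exists M : R, Mhat p alpha = Finite M /\
       (forall xi : R, Rbar_le (PhiStar p alpha xi) (Finite (M * (p / alpha * xi) ^ 2))) /\
       1 / 4 <= M /\
       (p = 1 / 2 -> 1 <= alpha -> M <= alpha / 2) /\
       (p = 1 / 2 -> alpha = 1 -> M = 1 / 2) /\
       (alpha = p + 1 -> M = 1 / 4)).
Proof.
  intros alpha p Ha Hp Hmax.
  assert (Hcond : 2 <= alpha/p \/ (0 < (p-1)/p /\ 2 <= (p-1)/p + alpha/p)).
  { unfold Rmax in Hmax. destruct (Rle_dec (alpha / 2) (alpha - 1)).
    - destruct (Rle_or_lt 2 (alpha/p)) as [Q|Q]; [left; auto|right].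
      assert (E2 : (p-1)/p + alpha/p = (p - 1 + alpha)/p) by (field; lra).
      assert (2 <= (p-1)/p + alpha/p).
      { rewrite E2. apply (Rmult_le_reg_r p); auto. replace ((p - 1 + alpha) / p * p) with (p - 1 + alpha) by (field; lra). lra. }
      split; lra.
    - left. apply (Rmult_le_reg_r p); auto. replace (alpha / p * p) with alpha by (field; lra). lra. }
  destruct (rr_global p alpha Hp Ha Hcond) as [B HB].
  assert (HSB : forall y, SS p alpha y -> y <= Rmax 0 B).
  { intros y Hy. destruct (S_char p alpha y Hy) as [->|[h [Hh ->]]].
    - apply Rmax_l. - eapply Rle_trans; [apply HB; auto| apply Rmax_r]. }
  destruct (lub_fin (SS p alpha) (Rmax 0 B) (rr p alpha 1) HSB (S_intro p alpha 1 ltac:(lra)))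
    as [M [EM [Mub Mlub]]].
  assert (Hmhat : Mhat p alpha = Lub_Rbar (SS p alpha)) by reflexivity.
  assert (Mq : 1/4 <= M).
  { destruct (Rle_or_lt (1/4) M) as [Q|Q]; auto. exfalso.
    destruct (rr_approach p alpha M Hp Ha ltac:(lra)) as [h [Hh Hlt]].
    pose proof (Mub _ (S_intro p alpha h Hh)). lra. }
  exists M. split; [rewrite Hmhat; exact EM|].
  split; [|split; [exact Mq|split; [|split]]].
  - intros xi. unfold PhiStar. destruct (Lub_Rbar_correct (fun y : R => exists z : R,
      Finite y = Rbar_minus (Finite (xi * z)) (Phi p alpha z))) as [_ lub].
    apply lub. intros x [z Ez].
    destruct (Rle_or_lt z (-1)) as [H1|H1].
    { rewrite Phi_le in Ez by auto. simpl in Ez. discriminate. }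
    rewrite Phi_eq in Ez by auto. simpl in Ez. injection Ez. intros ->. simpl.
    set (q := p / alpha * xi).
    assert (Exi : xi = alpha / p * q) by (unfold q; field; lra).
    destruct (Req_dec z 0) as [Hz|Hz].
    { subst z. replace (0+1) with 1 by ring. rewrite ln_1, Fh0.
      assert (0 <= M * q^2) by (apply Rmult_le_pos; [lra|apply pow2_ge_0]). nra. }
    set (h := ln (z+1)).
    assert (Hh : h <> 0). { intro Q. apply Hz. assert (exp h = exp 0) by (rewrite Q; reflexivity).
      unfold h in H. rewrite exp_ln, exp_0 in H by lra. lra. }
    assert (Ez1 : z = exp h - 1) by (unfold h; rewrite exp_ln by lra; ring).
    pose proof (Mub _ (S_intro p alpha h Hh)) as Hr.
    pose proof (F_pos p alpha h Hp Ha Hh) as FP.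
    unfold rr in Hr. rewrite <- Ez1 in Hr.
    set (F := Fh p alpha h) in *.
    set (b := alpha / p) in *.
    assert (Hc : alpha ^ 2 / (4 * p ^ 2) = b^2 / 4) by (unfold b; field; lra).
    rewrite Hc in Hr.
    assert (HMF : b^2/4 * z^2 <= M * F).
    { apply (Rmult_le_reg_r (/F)). apply Rinv_0_lt_compat; auto.
      replace (M * F * / F) with M by (field; lra). exact Hr. }
    rewrite Exi.
    assert (0 < M) by lra.
    assert (M * (M * q^2 - b * q * z + F) >= 0).
    { assert (M * (M * q^2 - b * q * z + F) = (M * q - b * z / 2)^2 + (M * F - b^2/4 * z^2)) by field.
      rewrite H0. pose proof (pow2_ge_0 (M * q - b * z / 2)). lra. }
    assert (M * q^2 - b * q * z + F >= 0).
    { destruct (Rle_or_lt 0 (M * q^2 - b * q * z + F)) as [Q|Q]; [lra|nra]. }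
    nra.
  - intros Hp2 Ha1. apply Mlub. intros y Hy. destruct (S_char p alpha y Hy) as [->|[h [Hh ->]]].
    + lra.
    + subst p. apply rr_half; auto.
  - intros Hp2 Ha1. subst p alpha.
    assert (M <= 1/2). { apply Mlub. intros y Hy. destruct (S_char (1/2) 1 y Hy) as [->|[h [Hh ->]]].
      + lra. + pose proof (rr_half 1 h ltac:(lra) Hh). lra. }
    destruct (Rle_or_lt (1/2) M) as [Q|Q]; [lra|]. exfalso.
    destruct (rr_half1_approach M Q) as [h [Hh Hlt]].
    pose proof (Mub _ (S_intro (1/2) 1 h Hh)). lra.
  - intros Hap. subst alpha.
    assert (M <= 1/4). { apply Mlub. intros y Hy. destruct (S_char p (p+1) y Hy) as [->|[h [Hh ->]]].
      + lra. + pose proof (rr_p1 p h Hp Hh). lra. }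
    lra.
Qed.
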